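(* There is no functional $M$ of type $3$ with $\mathsf{PR}(M)$ which is Kleene-computable (via the schemes S1–S9) in some functional $H$ of type $2$.
   Context: $C=2^{\mathbb N}$ is Cantor space. For $f\in C$ and $n\in\mathbb N$, $\overline{f}n=\langle f(0),\dots,f(n-1)\rangle$, and for a finite binary sequence $\sigma$, $[\sigma]$ is the set of $g\in C$ extending $\sigma$. For $F,G:C\to\mathbb N$, $\mathsf{LOC}(F,G)$ means $(\forall f,g\in C)\big(g\in[\overline{f}G(f)]\to F(g)\le G(f)\big)$ ($G$ is a realiser for local boundedness of $F$). For a functional $M$ mapping functionals $G:C\to\mathbb N$ to natural numbers, $\mathsf{PR}(M)$ means $(\forall F,G:C\to\mathbb N)\big(\mathsf{LOC}(F,G)\to(\forall g\in C)(F(g)\le M(G))\big)$; such $M$ is called a Pincherle realiser (PR). Computability is Kleene's higher-order computability given by the schemes S1–S9. *)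

(* Defs.v *)
From mathcomp Require Import all_boot.
Set Implicit Arguments.
Unset Strict Implicit.
Unset Printing Implicit Defensive.

(* obj 0 = nat, obj (n+1) = obj n -> nat : total functionals of pure type n. *)
Fixpoint obj (n : nat) : Type :=
  match n with 0 => nat | n'.+1 => obj n' -> nat end.

Definition arg := {n : nat & obj n}.
Definition argN (x : nat) : arg := existT obj 0 x.

Definition idx (e : nat) : seq nat := CodeSeq.decode e.

(** * Kleene's schemes S1-S9:  kleene e args a  means  {e}(args) = a. *)
Inductive kleene : nat -> seq arg -> nat -> Prop :=
| S1 e x rest : idx e = [:: 1] ->
    kleene e (argN x :: rest) x.+1
| S2 e q args : idx e = [:: 2; q] ->
    kleene e args q
| S3 e x rest : idx e = [:: 3] ->
    kleene e (argN x :: rest) x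
| S4 e e1 e2 args a b : idx e = [:: 4; e1; e2] ->
    kleene e2 args a -> kleene e1 (argN a :: args) b ->
    kleene e args b
| S5_0 e e1 e2 rest b : idx e = [:: 5; e1; e2] ->
    kleene e1 rest b -> kleene e (argN 0 :: rest) b
| S5_S e e1 e2 x rest a b : idx e = [:: 5; e1; e2] ->
    kleene e (argN x :: rest) a ->
    kleene e2 (argN a :: argN x :: rest) b ->
    kleene e (argN x.+1 :: rest) b
| S6 e e1 p args a : idx e = 6 :: e1 :: p ->
    perm_eq p (iota 0 (size args)) ->
    kleene e1 [seq nth (argN 0) args i | i <- p] a ->
    kleene e args a
| S7 e (f : obj 1) x rest : idx e = [:: 7] ->
    kleene e (existT obj 1 f :: argN x :: rest) (f x)
| S8 e d k (F : obj k.+2) rest (g : obj k -> nat) : idx e = [:: 8; d] ->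
    (forall xi : obj k,
        kleene d (existT obj k xi :: existT obj k.+2 F :: rest) (g xi)) ->
    kleene e (existT obj k.+2 F :: rest) (F g)
| S9 e m e' rest a : idx e = [:: 9; m] ->
    kleene e' (take m rest) a ->
    kleene e (argN e' :: rest) a.

Definition computable_in (M : obj 3) (H : obj 2) : Prop :=
  exists e : nat, forall G : obj 2,
    kleene e [:: existT obj 2 G; existT obj 2 H] (M G).

Definition inC (f : nat -> nat) : Prop := forall n, f n <= 1.

Definition in_cyl (f : nat -> nat) (n : nat) (g : nat -> nat) : Prop :=
  forall i, i < n -> g i = f i.

(* LOC(F,G) for F G : C -> N (represented by type-2 functionals,
   only their values on C matter). *)
Definition LOC (F G : obj 2) : Prop :=
  forall f g : nat -> nat, inC f -> inC g -> in_cyl f (G f) g -> F g <= G f.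

Definition PR (M : obj 3) : Prop :=
  forall F G : obj 2, LOC F G -> forall g : nat -> nat, inC g -> F g <= M G.

(* Main.v *)
Require Import Defs.
From mathcomp Require Import all_boot.
From mathcomp Require Import classical_sets.
From Stdlib Require Import ClassicalEpsilon Classical FunctionalExtensionality Eqdep_dec.
Set Implicit Arguments. Unset Strict Implicit.

Definition slot := (nat + bool)%type.

Section PK.
Variable A : (nat -> nat) -> nat -> Prop.
Variable Hf : obj 2.

Inductive pk : nat -> seq slot -> nat -> Prop :=
| P1 e x rest : idx e = [:: 1] -> pk e (inl x :: rest) x.+1
| P2 e q args : idx e = [:: 2; q] -> pk e args q
| P3 e x rest : idx e = [:: 3] -> pk e (inl x :: rest) x
| P4 e e1 e2 args a b : idx e = [:: 4; e1; e2] ->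
    pk e2 args a -> pk e1 (inl a :: args) b -> pk e args b
| P5_0 e e1 e2 rest b : idx e = [:: 5; e1; e2] ->
    pk e1 rest b -> pk e (inl 0 :: rest) b
| P5_S e e1 e2 x rest a b : idx e = [:: 5; e1; e2] ->
    pk e (inl x :: rest) a -> pk e2 (inl a :: inl x :: rest) b ->
    pk e (inl x.+1 :: rest) b
| P6 e e1 p args a : idx e = 6 :: e1 :: p ->
    perm_eq p (iota 0 (size args)) ->
    pk e1 [seq nth (inl 0) args i | i <- p] a -> pk e args a
| P8G e d rest (g : nat -> nat) v : idx e = [:: 8; d] ->
    (forall xi, pk d (inl xi :: inr true :: rest) (g xi)) -> A g v ->
    pk e (inr true :: rest) v
| P8H e d rest (g : nat -> nat) : idx e = [:: 8; d] ->
    (forall xi, pk d (inl xi :: inr false :: rest) (g xi)) ->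
    pk e (inr false :: rest) (Hf g)
| P9 e m e' rest a : idx e = [:: 9; m] ->
    pk e' (take m rest) a -> pk e (inl e' :: rest) a.

Hypothesis Afun : forall g v v', A g v -> A g v' -> v = v'.

Ltac idxeq := match goal with
  | h1 : idx ?e = _, h2 : idx ?e = _ |- _ => rewrite h1 in h2; injection h2; clear h2; intros; subst
  end.

Lemma pk_det e args a : pk e args a -> forall b, pk e args b -> a = b.
Proof.
elim=> {e args a}.
- move=> e x rest hi b h2; inversion h2; subst; try congruence.
- move=> e q args hi b h2; inversion h2; subst; congruence.
- move=> e x rest hi b h2; inversion h2; subst; try congruence.
- move=> e e1 e2 args a b hi _ IH2 _ IH1 c h2; inversion h2; subst; try congruence.
  idxeq. have := IH2 _ ltac:(eassumption) => ?; subst.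
  by apply: IH1; eassumption.
- move=> e e1 e2 rest b hi _ IH c h2; inversion h2; subst; try congruence.
  idxeq. by apply: IH; eassumption.
- move=> e e1 e2 x rest a b hi _ IHa _ IHb c h2; inversion h2; subst; try congruence.
  idxeq. have := IHa _ ltac:(eassumption) => ?; subst.
  by apply: IHb; eassumption.
- move=> e e1 p args a hi _ _ IH c h2; inversion h2; subst; try congruence.
  idxeq. by apply: IH; eassumption.
- move=> e d rest g v hi _ IH Ag c h2; inversion h2; subst; try congruence.
  idxeq.
  match goal with h : A ?g0 c |- _ =>
    have eg : g = g0 by apply: functional_extensionality => xi; apply: IH; eauto end.
  subst; by apply: Afun Ag _.
- move=> e d rest g hi _ IH c h2; inversion h2; subst; try congruence.
  idxeq.
  match goal with |- Hf g = Hf ?g0 =>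
    have eg : g = g0 by apply: functional_extensionality => xi; apply: IH; eauto end.
  by subst.
- move=> e m e' rest a hi _ IH c h2; inversion h2; subst; try congruence.
  idxeq. by apply: IH; eassumption.
Qed.
End PK.

Lemma pk_mono (A B : (nat -> nat) -> nat -> Prop) Hf :
  (forall g v, A g v -> B g v) ->
  forall e s a, pk A Hf e s a -> pk B Hf e s a.
Proof.
move=> AB e s a; elim=> {e s a}; try by econstructor; eauto.
Qed.

Definition interp (X Hf : obj 2) (s : slot) : arg :=
  match s with
  | inl n => existT obj 0 n
  | inr true => existT obj 2 X
  | inr false => existT obj 2 Hf
  end.

Lemma interp_inl X Hf s x : existT obj 0 x = interp X Hf s -> s = inl x.
Proof.
case: s => [n|[]] /= h.
- by have := inj_pair2_eq_dec nat PeanoNat.Nat.eq_dec obj 0 x n h => ->.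
- by have := f_equal (@projT1 _ _) h.
- by have := f_equal (@projT1 _ _) h.
Qed.

Lemma kleene_pk (A : (nat -> nat) -> nat -> Prop) (X Hf : obj 2) :
  (forall g v, A g v -> X g = v) ->
  (forall d rest (g : nat -> nat),
      (forall xi, pk A Hf d (inl xi :: inr true :: rest) (g xi)) -> exists v, A g v) ->
  forall e args a, kleene e args a ->
  forall slots, args = map (interp X Hf) slots -> pk A Hf e slots a.
Proof.
move=> AX clos e args a; elim=> {e args a}.
- move=> e x rest hi [|s sl] //= [/interp_inl -> _]; exact: P1.
- move=> e q args hi sl _; exact: P2.
- move=> e x rest hi [|s sl] //= [/interp_inl -> _]; exact: P3.
- move=> e e1 e2 args a b hi _ IH2 _ IH1 sl E.
  apply: P4 hi (IH2 _ E) (IH1 (inl a :: sl) _); by rewrite E.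
- move=> e e1 e2 rest b hi _ IH [|s sl] //= [/interp_inl -> E].
  exact: P5_0 hi (IH _ E).
- move=> e e1 e2 x rest a b hi _ IHa _ IHb [|s sl] //= [/interp_inl -> E].
  apply: P5_S hi (IHa (inl x :: sl) _) (IHb (inl a :: inl x :: sl) _); by rewrite E.
- move=> e e1 p args a hi pp _ IH sl E.
  apply: P6 hi _ (IH _ _).
    by rewrite E size_map in pp.
  rewrite E -map_comp; apply/eq_in_map => i ip /=.
  have ilt : i < size sl.
    by move: ip; rewrite (perm_mem pp) mem_iota E size_map.
  by rewrite (nth_map (inl 0)).
- move=> e f x rest hi [|s sl] //= [h _].
  by case: s h => [n|[]] /= h; have := f_equal (@projT1 _ _) h.
- move=> e d k F rest g hi _ IH [|s sl] //= [h E].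
  case: s h => [n|b] h; first by have := f_equal (@projT1 _ _) h.
  case: k F g IH h => [|k] F g IH h; last by case: b h => h; have := f_equal (@projT1 _ _) h.
  case: b h => h.
  + have eF := inj_pair2_eq_dec nat PeanoNat.Nat.eq_dec obj 2 F X h; subst F.
    have hg : forall xi, pk A Hf d (inl xi :: inr true :: sl) (g xi).
      by move=> xi; apply: IH; rewrite E.
    have [v Av] := clos _ _ _ hg.
    rewrite (AX _ _ Av); exact: P8G hi hg Av.
  + have eF := inj_pair2_eq_dec nat PeanoNat.Nat.eq_dec obj 2 F Hf h; subst F.
    apply: P8H hi _ => xi; apply: IH; by rewrite E.
- move=> e m e' rest a hi _ IH [|s sl] //= [/interp_inl -> E].
  apply: P9 hi (IH _ _); by rewrite E map_take.
Qed.

Definition code (d : nat) (rest : seq slot) : nat := pickle (d, rest).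

Definition relS (S : set ((nat -> nat) * nat)) (g : nat -> nat) (v : nat) : Prop := S (g, v).

Definition Good (Hf : obj 2) (S : set ((nat -> nat) * nat)) : Prop :=
  (forall g v v', S (g, v) -> S (g, v') -> v = v') /\
  (forall g v, S (g, v) -> exists d rest, v = (code d rest).+2 /\
     forall xi, pk (relS S) Hf d (inl xi :: inr true :: rest) (g xi)).

Lemma exists_max (Hf : obj 2) : exists A0, Good Hf A0 /\
  (forall d rest (g : nat -> nat),
      (forall xi, pk (relS A0) Hf d (inl xi :: inr true :: rest) (g xi)) ->
      exists v, A0 (g, v)).
Proof.
case: (@Zorn_bigcup _ (Good Hf)) => [F FG Ftot|A0 [GA0 maxA0]]; last first.
  exists A0; split=> // d rest g hp.
  apply: NNPP => nex.
  pose B := fun p => A0 p \/ p = (g, (code d rest).+2).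
  apply: (maxA0 B).
    split; first by move=> p hp'; left.
    move=> sub; apply: nex; exists (code d rest).+2; apply: sub; by right.
  split.
  - move=> g' v v' [h1|h1] [h2|h2].
    + exact: (proj1 GA0) h1 h2.
    + case: h2 => ??; subst; exfalso; apply: nex; by exists v.
    + case: h1 => ??; subst; exfalso; apply: nex; by exists v'.
    + case: h1 => ??; case: h2 => ??; by subst.
  - move=> g' v [h1|h1].
    + have [d' [rest' [-> hp']]] := proj2 GA0 g' v h1.
      exists d', rest'; split=> // xi; apply: pk_mono (hp' xi).
      by move=> ? ? ?; left.
    + case: h1 => ??; subst; exists d, rest; split=> // xi; apply: pk_mono (hp xi).
      by move=> ? ? ?; left.
split.
  - move=> g v v' [X FX Xv] [Y FY Yv'].
    case: (Ftot X Y FX FY) => sub.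
    + exact: (proj1 (FG Y FY)) g v v' (sub _ Xv) Yv'.
    + exact: (proj1 (FG X FX)) g v v' Xv (sub _ Yv').
  - move=> g v [X FX Xv].
    have [d [rest [-> hp]]] := proj2 (FG X FX) g v Xv.
    exists d, rest; split=> // xi; apply: pk_mono (hp xi).
    by move=> g' v' h; exists X.
Qed.

Theorem theorem3p1 :
  forall (M : obj 3), PR M -> forall H : obj 2, ~ computable_in M H.
Proof.
move=> M hPR Hf [e He].
have [A0 [[Afun AGood] clos]] := exists_max Hf.
pose A := relS A0.
pose P i (g : nat -> nat) := exists d rest, i = code d rest /\
   forall xi, pk A Hf d (inl xi :: inr true :: rest) (g xi).
pose gam i := epsilon (inhabits (fun _ : nat => 0)) (P i).
pose z (n : nat) := if n is j.+1 then (if gam j n == 0 then 1 else 0) else 0.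
have inCz : inC z by case=> [|n] //=; case: ifP.
have key : forall g v, A g v -> inC g -> ~ in_cyl g v z.
  move=> g v Av Cg cyl.
  have [d [rest [ev hp]]] := AGood g v Av.
  have Pg : P (code d rest) g by exists d, rest.
  have [d' [rest' [ec hp']]] := epsilon_spec (inhabits (fun _ : nat => 0)) (P (code d rest)) (ex_intro _ g Pg).
  have := pcan_inj (@pickleK_inv _) ec; case=> ??; subst d' rest'.
  have eq1 : gam (code d rest) (code d rest).+1 = g (code d rest).+1.
    apply: (pk_det Afun (hp' _) (hp _)).
  have := cyl (code d rest).+1; rewrite ev ltnSn => /(_ isT).
  rewrite /z eq1; have := Cg (code d rest).+1.
  by case: (g _) => [|[|]].
pose G (k : nat) : obj 2 := fun f =>
  match excluded_middle_informative (exists v, A f v) with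
  | left h => proj1_sig (constructive_indefinite_description _ h)
  | right _ =>
    match excluded_middle_informative (forall n, f n = z n) with
    | left _ => k
    | right h' => (proj1_sig (constructive_indefinite_description _ (not_all_ex_not _ _ h'))).+1
    end
  end.
pose F (k : nat) : obj 2 := fun h =>
  if excluded_middle_informative (forall n, h n = z n) then k else 0.
have GA : forall k g v, A g v -> G k g = v.
  move=> k g v Av; rewrite /G; case: excluded_middle_informative => [h|h].
  - case: constructive_indefinite_description => v' /= Av'; exact: Afun Av' Av.
  - by exfalso; apply: h; exists v.
have LOCk : forall k, LOC (F k) (G k).
  move=> k f g Cf Cg cyl; rewrite /F; case: excluded_middle_informative => [gz|_] //.
  move: cyl; rewrite /G; case: excluded_middle_informative => [h|nh].
  - case: constructive_indefinite_description => v /= Av cyl; exfalso.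
    apply: (key f v Av Cf) => i hi; rewrite -(gz i); exact: cyl.
  - case: excluded_middle_informative => [//|hne].
    case: constructive_indefinite_description => n /= hn cyl; exfalso.
    apply: hn; rewrite -(gz n); symmetry; apply: cyl; exact: ltnSn.
have Mge : forall k, k <= M (G k).
  move=> k; have := hPR (F k) (G k) (LOCk k) z inCz.
  by rewrite /F; case: excluded_middle_informative => // [[]].
have comp : forall k, pk A Hf e [:: inr true; inr false] (M (G k)).
  move=> k; exact: (@kleene_pk A (G k) Hf (GA k) clos e _ _ (He (G k)) [:: inr true; inr false] erefl).
have := Mge (M (G 0)).+1.
by rewrite (pk_det Afun (comp (M (G 0)).+1) (comp 0)) ltnn.
Qed.
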